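(* Let $\mathcal P$ be a countable set and consider a discrete-time Markov process $\{Z_t\}_{t\ge0}=\{(x_t,y_t)\}_{t\ge0}$ on $\mathbb R^d_+\times\mathcal P$ defined as follows: for each $i\in\mathcal P$ there is a measurable map $f(\cdot,i):\mathbb R^d_+\to\mathbb R^d_+$; there is a measurable map $P:\mathbb R^d_+\times\mathcal P\times\mathcal P\to[0,1]$ such that for each $(x,y)$, $P_x(y,\cdot):=P(x,y,\cdot)$ is a probability on $\mathcal P$; given $(x_n,y_n)=(x,y)$, first $y_{n+1}$ is drawn according to $P_x(y,\cdot)$ and then $x_{n+1}=f(x,y_{n+1})$; the initial state $(x_0,y_0)\in\mathbb R^d_+\times\mathcal P$ is given. Assume there is a constant $L>0$ with $\|x-f(x,i)\|\le L$ for all $(x,i)\in\mathbb R^d_+\times\mathcal P$. Suppose further that there exist a bounded measurable set $C\subset\mathbb R^d_+$ and a constant $a>0$ such that $$\sum_{y'\in\mathcal P}P_x(y,y')f(x,y')-x\le -a\frac{x}{\|x\|}\quad\text{for all }(x,y)\in(\mathbb R^d_+\setminus C)\times\mathcal P.$$ Then for every $r>0$, $\sup_{t\ge0}\mathbb E[\|x_t\|^r]<\infty$.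
   Context: $\mathbb R^d_+=\{x\in\mathbb R^d:x_i\ge0\ \forall i\}$, $\|\cdot\|$ is the Euclidean norm, and vector inequalities are component-wise. *)

(* Defs.v *)
From HB Require Import structures.
From mathcomp Require Import all_boot all_order all_algebra.
From mathcomp Require Import all_classical all_reals all_analysis.
Set Implicit Arguments. Unset Strict Implicit. Unset Printing Implicit Defensive.
Import Order.TTheory GRing.Theory Num.Theory.
Local Open Scope classical_set_scope.
Local Open Scope ring_scope.

Definition enorm (R : realType) (d : nat) (x : 'rV[R]_d) : R :=
  Num.sqrt (\sum_(j < d) x ord0 j ^+ 2).

Definition nonneg_vec (R : realType) (d : nat) (x : 'rV[R]_d) : Prop :=
  forall j : 'I_d, 0 <= x ord0 j.

(* Expectation of g(Z_t) for the Markov chain Z_t = (x_t, y_t) started at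
   Z_0 = (x, y), where y_{n+1} ~ P x_n y_n . and x_{n+1} = f x_n y_{n+1}.
   By the Markov property (one-step analysis)
     E_{(x,y)}[g(Z_0)]     = g(x,y),
     E_{(x,y)}[g(Z_{t+1})] = sum_{y'} P x y y' * E_{(f x y', y')}[g(Z_t)].
   g is nonnegative, extended-real valued; the countable sums are
   sums of nonnegative terms (esum). *)
Fixpoint chain_exp (R : realType) (d : nat) (Pc : choiceType)
    (f : 'rV[R]_d -> Pc -> 'rV[R]_d) (P : 'rV[R]_d -> Pc -> Pc -> R)
    (t : nat) (g : 'rV[R]_d -> Pc -> \bar R) (x : 'rV[R]_d) (y : Pc)
    : \bar R :=
  match t with
  | 0 => g x y
  | t'.+1 => (\esum_(y' in [set: Pc])
               ((P x y y')%:E * chain_exp f P t' g (f x y') y'))%E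
  end.

(* Main.v *)
Require Import Defs.
From HB Require Import structures.
From mathcomp Require Import all_boot all_order all_algebra.
From mathcomp Require Import all_classical all_reals all_analysis.
From mathcomp Require Import ring lra.
Import Order.TTheory GRing.Theory Num.Theory.
Set Implicit Arguments. Unset Strict Implicit.
Local Open Scope classical_set_scope.
Local Open Scope ring_scope.

Section CS.
Variables (R : realType) (d : nat).
Implicit Types a b : 'I_d -> R.

Lemma quadE a b t : \sum_j (t * a j + b j) ^+ 2 =
  t ^+ 2 * (\sum_j a j ^+ 2) + 2 * t * (\sum_j a j * b j) + \sum_j b j ^+ 2.
Proof.
rewrite (eq_bigr (fun j => t ^+ 2 * a j ^+ 2 + 2 * t * (a j * b j) + b j ^+ 2)); last first.
  by move=> j _; ring.
by rewrite !big_split /= -!mulr_sumr.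
Qed.

Lemma CS a b : (\sum_j a j * b j) ^+ 2 <= (\sum_j a j ^+ 2) * (\sum_j b j ^+ 2).
Proof.
set A := \sum_j a j ^+ 2; set B := \sum_j a j * b j; set C := \sum_j b j ^+ 2.
have H t : 0 <= t ^+ 2 * A + 2 * t * B + C.
  by rewrite -quadE; apply: sumr_ge0 => j _; exact: sqr_ge0.
have A0 : 0 <= A by apply: sumr_ge0 => j _; exact: sqr_ge0.
have C0 : 0 <= C by apply: sumr_ge0 => j _; exact: sqr_ge0.
have [Ap|A0'] := ltrP 0 A.
  have := H (- B / A).
  have -> : (- B / A) ^+ 2 * A + 2 * (- B / A) * B + C = C - B ^+ 2 / A.
    by field; rewrite gt_eqF.
  rewrite subr_ge0 ler_pdivrMr // => h; by rewrite mulrC.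
have A00 : A = 0 by apply/eqP; rewrite eq_le A0' A0.
have [B0|B0] := eqVneq B 0; first by rewrite B0 A00 expr0n /= mul0r.
have := H (- (C + 1) / (2 * B)).
have -> : (- (C + 1) / (2 * B)) ^+ 2 * A + 2 * (- (C + 1) / (2 * B)) * B + C = - 1.
  by rewrite A00; field.
move=> h; have : (0:R) < 0 by apply: (le_lt_trans h); rewrite ltrN10.
by rewrite ltxx.
Qed.
End CS.

Section Vec.
Variables (R : realType) (d : nat).
Implicit Types x y : 'rV[R]_d.
Definition sq x := \sum_(j < d) x ord0 j ^+ 2.
Definition dot x y := \sum_(j < d) x ord0 j * y ord0 j.
Definition en x := Num.sqrt (sq x).

Lemma sq_ge0 x : 0 <= sq x.
Proof. by apply: sumr_ge0 => j _; exact: sqr_ge0. Qed.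

Lemma en_ge0 x : 0 <= en x. Proof. exact: sqrtr_ge0. Qed.

Lemma en_sqr x : en x ^+ 2 = sq x.
Proof. by rewrite /en sqr_sqrtr // sq_ge0. Qed.

Lemma sqB x y : sq (x - y) = sq x - 2 * dot x y + sq y.
Proof.
rewrite /sq /dot (eq_bigr (fun j => x ord0 j ^+ 2 + y ord0 j ^+ 2 - 2 * (x ord0 j * y ord0 j))); last first.
  by move=> j _; rewrite !mxE; ring.
rewrite sumrB big_split /= -mulr_sumr; ring.
Qed.

Lemma dot_le x y : dot x y <= en x * en y.
Proof.
have h := CS (fun j => x ord0 j) (fun j => y ord0 j).
rewrite -/(dot x y) -/(sq x) -/(sq y) -!en_sqr in h.
have := en_ge0 x; have := en_ge0 y; move=> h1 h2; rewrite -exprMn in h.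
case: (lerP (dot x y) 0) => hd; first by rewrite (le_trans hd) ?mulr_ge0.
by rewrite -(@ler_pXn2r _ 2) // nnegrE ?mulr_ge0 // ltW.
Qed.

Lemma en_rev x y : `|en x - en y| <= en (x - y).
Proof.
rewrite /en sqB -sqrtr_sqr ler_sqrt; last first.
  by rewrite -sqB sq_ge0.
rewrite -/(en x) -/(en y) -!en_sqr; have := dot_le x y; nra.
Qed.

Lemma en_key x y L : (forall j, 0 <= x ord0 j) -> (forall j, 0 <= y ord0 j) ->
  en (x - y) <= L -> en x * en y <= dot x y + L ^+ 2 / 2.
Proof.
move=> hx hy hL.
have p0 : 0 <= dot x y by apply: sumr_ge0 => j _; rewrite mulr_ge0.
have h1 : sq (x - y) <= L ^+ 2.
  by rewrite -en_sqr; have := en_ge0 (x - y); nra.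
rewrite sqB -!en_sqr in h1.
have := sqr_ge0 (en x - en y); nra.
Qed.
End Vec.

Section Expo.
Variable R : realType.
Lemma exp_quad (u : R) : u <= 1 / 2 -> expR u <= 1 + u + 2 * u ^+ 2.
Proof.
move=> hu.
have h1 : 1 - u <= expR (- u) by exact: expR_ge1Dx.
have h2 : expR u * expR (- u) = 1 by rewrite -expRD subrr expR0.
have h3 := expR_gt0 u.
have h4 : 0 < 1 - u by lra.
have h5 : expR u * (1 - u) <= 1 by rewrite -[X in _ <= X]h2 ler_pM2l.
have h6 : 1 <= (1 - u) * (1 + u + 2 * u ^+ 2).
  have : 0 <= u ^+ 2 * (1 - 2 * u) by rewrite mulr_ge0 ?sqr_ge0 //; lra.
  have -> : (1 - u) * (1 + u + 2 * u ^+ 2) = 1 + u ^+ 2 * (1 - 2 * u) by ring.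
  lra.
by rewrite -(ler_pM2r h4); lra.
Qed.

Lemma pow_exp (r th s : R) : 0 < r -> 0 < th -> 0 <= s ->
  s `^ r <= expR (r * ln (r / th)) * expR (th * s).
Proof.
move=> r0 t0 s0.
have [->|sp] := eqVneq s 0.
  by rewrite powR0 ?gt_eqF // mulr_ge0 // expR_ge0.
have s0' : 0 < s by rewrite lt_neqAle eq_sym sp s0.
rewrite /powR (negbTE sp) -expRD ler_expR.
have hl : ln (s * th / r) < s * th / r by apply: ln_sublinear; rewrite divr_gt0 ?mulr_gt0.
have e : ln s = ln (s * th / r) + ln (r / th).
  rewrite -lnM ?posrE ?divr_gt0 ?mulr_gt0 //; congr ln; field.
  by rewrite !gt_eqF.
rewrite e mulrDr.
have h : r * ln (s * th / r) <= r * (s * th / r) by rewrite ler_pM2l // ltW.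
have e2 : r * (s * th / r) = th * s by field; rewrite gt_eqF.
rewrite e2 in h.
lra.
Qed.
End Expo.

Section Esum.
Variables (R : realType) (T : choiceType).
Local Open Scope ereal_scope.
Local Open Scope classical_set_scope.

Lemma esumZ_le (c : R) (a : T -> \bar R) : (0 <= c)%R -> (forall i, 0 <= a i) ->
  \esum_(i in [set: T]) (c%:E * a i) <= c%:E * \esum_(i in [set: T]) a i.
Proof.
move=> c0 a0; rewrite {1}/esum; apply: ge_ereal_sup => _ [X [finX XI] <-].
rewrite -ge0_mule_fsumr //; apply: lee_wpmul2l; first by rewrite lee_fin.
by apply: ereal_sup_ubound; exists X.
Qed.

Lemma esumZ (c : R) (a : T -> \bar R) : (0 <= c)%R -> (forall i, 0 <= a i) ->
  \esum_(i in [set: T]) (c%:E * a i) = c%:E * \esum_(i in [set: T]) a i.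
Proof.
move=> c0 a0; apply/eqP; rewrite eq_le esumZ_le //=.
have [->|cp] := eqVneq c 0%R.
  by rewrite mul0e esum_ge0 // => i _; rewrite mul0e.
have cp' : (0 < c)%R by rewrite lt_neqAle eq_sym cp c0.
have h := @esumZ_le c^-1 (fun i => c%:E * a i).
rewrite (eq_esum (b := a)) in h; last first.
  by move=> i _; rewrite muleA -EFinM mulVf // mul1e.
have ci : (0 <= c^-1)%R by rewrite invr_ge0.
have h2 := h ci.
have : (c%:E * (\esum_(i in [set: T]) a i) <=
   c%:E * (c^-1%:E * \esum_(i in [set: T]) (c%:E * a i)))%E.
  apply: lee_wpmul2l; first by rewrite lee_fin.
  by apply: h2 => i; rewrite mule_ge0 // lee_fin.
by rewrite muleA -EFinM mulfV // mul1e.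
Qed.

Lemma esum_big (I : Type) (s : seq I) (g : I -> T -> \bar R) :
  (forall k i, 0 <= g k i) ->
  \esum_(i in [set: T]) (\sum_(k <- s) g k i) = \sum_(k <- s) \esum_(i in [set: T]) g k i.
Proof.
move=> g0; elim: s => [|k s IH].
  by rewrite big_nil esum1 // => i _; rewrite big_nil.
rewrite big_cons -IH -esumD //; first by apply: eq_esum => i _; rewrite big_cons.
by move=> i _; rewrite sume_ge0.
Qed.
End Esum.

Section Pt.
Variable R : realType.
Lemma pt_ineq (th L N e D : R) : 0 < th -> 0 < N -> 2 * th * L <= 1 ->
  `|e - N| <= L -> N * e <= D + L ^+ 2 / 2 ->
  expR (th * e) <= expR (th * N) *
    (th * D / N + (1 + th * L ^+ 2 / (2 * N) + 2 * th ^+ 2 * L ^+ 2) - th * N).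
Proof.
move=> t0 N0 htL hd hk.
have -> : th * e = th * N + th * (e - N) by ring.
rewrite expRD ler_pM2l ?expR_gt0 //.
set u := th * (e - N).
have L0 : 0 <= L by apply: le_trans hd.
have hsq : (e - N) ^+ 2 <= L ^+ 2.
  by rewrite -real_normK ?num_real // lerXn2r // nnegrE.
have hu2 : u ^+ 2 <= th ^+ 2 * L ^+ 2 by rewrite /u exprMn ler_wpM2l // sqr_ge0.
have hu : u <= 1 / 2.
  have : u <= th * L by rewrite /u; apply: ler_wpM2l; [exact: ltW|]; move: hd; rewrite ler_norml => /andP[]; lra.
  lra.
have he : e <= (D + L ^+ 2 / 2) / N by rewrite ler_pdivlMr // mulrC.
have he2 : th * e <= th * D / N + th * L ^+ 2 / (2 * N).
  have -> : th * D / N + th * L ^+ 2 / (2 * N) = th * ((D + L ^+ 2 / 2) / N).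
    by field; rewrite gt_eqF.
  by rewrite ler_wpM2l // ltW.
have := exp_quad hu; rewrite /u in hu2 *; lra.
Qed.
End Pt.

Section OneStep.
Local Open Scope classical_set_scope.
Lemma one_step (R : realType) (d : nat) (Pc : choiceType)
    (f : 'rV[R]_d -> Pc -> 'rV[R]_d) (P : 'rV[R]_d -> Pc -> Pc -> R)
    (L a M R0 th : R) (C : set 'rV[R]_d) :
  (forall x i, nonneg_vec x -> nonneg_vec (f x i)) ->
  (forall x y y', 0 <= P x y y') ->
  (forall x y, (\esum_(y' in [set: Pc]) (P x y y')%:E = 1)%E) ->
  (forall x i, nonneg_vec x -> enorm (x - f x i) <= L) ->
  (forall x, C x -> enorm x <= M) ->
  0 < a ->
  (forall x y, nonneg_vec x -> ~ C x ->
     forall j : 'I_d,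
       (\esum_(y' in [set: Pc]) ((P x y y') * (f x y' ord0 j))%:E
          <= (x ord0 j - a * (x ord0 j / enorm x))%:E)%E) ->
  0 < th -> 2 * th * L <= 1 -> 8 * th * L ^+ 2 <= a -> th * a <= 1 ->
  M <= R0 -> L ^+ 2 / a <= R0 -> 0 <= R0 ->
  forall x y, nonneg_vec x ->
  (\esum_(y' in [set: Pc]) (P x y y' * expR (th * enorm (f x y')))%:E
     <= ((1 - th * a / 4) * expR (th * enorm x) + expR (th * (R0 + L)))%:E)%E.
Proof.
move=> fnn P0 P1 hL hC a0 hdr t0 htL htL2 hta hMR hLR hR0 x y xnn.
have L0 : 0 <= L.
  by apply: le_trans (hL x y xnn); exact: en_ge0.
have rho0 : 0 <= 1 - th * a / 4 by lra.
have V0 : 0 <= expR (th * enorm x) := expR_ge0 _.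
have dist i : `|enorm (f x i) - enorm x| <= L.
  rewrite distrC; apply: le_trans (hL x i xnn); exact: en_rev.
have [hN|hN] := lerP (enorm x) R0.
  apply: (@le_trans _ _ (\esum_(y' in [set: Pc]) ((expR (th * (R0 + L)))%:E * (P x y y')%:E))%E).
    apply: le_esum => i _; rewrite -EFinM lee_fin [X in _ <= X]mulrC; apply: ler_wpM2l => //.
    rewrite ler_expR; apply: ler_wpM2l; first exact: ltW.
    by move: (dist i); rewrite ler_norml => /andP[_]; lra.
  rewrite esumZ ?expR_ge0 //; last by move=> i; rewrite lee_fin.
  rewrite P1 mule1 lee_fin lerDr mulr_ge0 //.
have N0 : 0 < enorm x.
  exact: (le_lt_trans (le_trans (divr_ge0 (sqr_ge0 L) (ltW a0)) hLR) hN).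
have nC : ~ C x by move=> /hC; lra.
set N := enorm x in hN N0 V0 dist hdr *.
set E0 := expR (th * N) in V0 *.
set K1 := 1 + th * L ^+ 2 / (2 * N) + 2 * th ^+ 2 * L ^+ 2.
have E0p : 0 < E0 := expR_gt0 _.
have pt i : ((P x y i * expR (th * enorm (f x i)))%:E + (E0 * th * N)%:E * (P x y i)%:E <=
   (E0 * th / N)%:E * (\sum_(j < d) ((x ord0 j)%:E * (P x y i * f x i ord0 j)%:E))
    + (E0 * K1)%:E * (P x y i)%:E)%E.
  under eq_bigr do rewrite -EFinM.
  rewrite sumEFin -!EFinM -!EFinD lee_fin.
  have eD : \sum_(j < d) x ord0 j * (P x y i * f x i ord0 j) = P x y i * dot x (f x i).
    by rewrite /dot mulr_sumr; apply: eq_bigr => j _; ring.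
  rewrite eD.
  have h := @pt_ineq R th L N (enorm (f x i)) (dot x (f x i)) t0 N0 htL (dist i)
     (en_key xnn (fnn x i xnn) (hL x i xnn)).
  have h2 := ler_wpM2l (P0 x y i) h.
  have e3 : P x y i * (E0 * (th * dot x (f x i) / N + K1 - th * N)) =
     E0 * th / N * (P x y i * dot x (f x i)) + E0 * K1 * P x y i - E0 * th * N * P x y i.
    by rewrite /E0 /K1; ring.
  rewrite e3 in h2; lra.
have nnP i : (0 <= (P x y i)%:E)%E by rewrite lee_fin.
have nnT i : (0 <= \sum_(j < d) ((x ord0 j)%:E * (P x y i * f x i ord0 j)%:E))%E.
  apply: sume_ge0 => j _; rewrite -EFinM lee_fin mulr_ge0 // mulr_ge0 //; exact: fnn.
have S := le_esum (I := [set: Pc]) (fun i _ => pt i).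
rewrite esumD in S; [|
  by move=> i _; rewrite lee_fin mulr_ge0 // expR_ge0 |
  by move=> i _; rewrite mule_ge0 // lee_fin mulr_ge0 // ?mulr_ge0 // ltW].
have K10 : 0 <= K1.
  have k1 : 0 <= th * L ^+ 2 / (2 * N).
    by apply: divr_ge0; [apply: mulr_ge0; [exact: ltW|exact: sqr_ge0]|apply: mulr_ge0 => //; exact: ltW].
  have k2 : 0 <= 2 * th ^+ 2 * L ^+ 2 by apply: mulr_ge0; [apply: mulr_ge0 => //; exact: sqr_ge0|exact: sqr_ge0].
  rewrite /K1; lra.
rewrite esumD in S; [|
  by move=> i _; rewrite mule_ge0 // lee_fin divr_ge0 ?mulr_ge0 // ltW |
  by move=> i _; rewrite mule_ge0 // lee_fin mulr_ge0 // ltW].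
have c1 : 0 <= E0 * th * N by rewrite !mulr_ge0 // ltW.
have c2 : 0 <= E0 * th / N by rewrite divr_ge0 ?mulr_ge0 // ltW.
have c3 : 0 <= E0 * K1 by rewrite mulr_ge0.
rewrite !esumZ ?P1 ?mule1 // in S.
rewrite esum_big in S; last first.
  by move=> j i; rewrite -EFinM lee_fin mulr_ge0 // mulr_ge0 //; exact: fnn.
have S3 : (\sum_(j < d) \esum_(i in [set: Pc]) ((x ord0 j)%:E * (P x y i * f x i ord0 j)%:E)
    <= (N ^+ 2 - a * N)%:E)%E.
  apply: (@le_trans _ _ (\sum_(j < d) (x ord0 j * (x ord0 j - a * (x ord0 j / N)))%:E)%E).
    apply: lee_sum => j _; rewrite esumZ //; last first.
      by move=> i; rewrite lee_fin mulr_ge0 //; exact: fnn.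
    by rewrite EFinM; apply: lee_wpmul2l; [rewrite lee_fin|exact: hdr].
  rewrite sumEFin lee_fin.
  rewrite (eq_bigr (fun j => x ord0 j ^+ 2 - (a / N) * x ord0 j ^+ 2)); last first.
    by move=> j _; ring.
  rewrite sumrB -mulr_sumr -/(sq x) -en_sqr -/(enorm x) -/N.
  have -> : en x = N by [].
  have -> : N ^+ 2 - a / N * N ^+ 2 = N ^+ 2 - a * N by field; rewrite gt_eqF.
  by [].
have S4 := lee_wpmul2l (x := (E0 * th / N)%:E) _ S3.
rewrite lee_fin in S4; have {}S4 := S4 c2.
have S5 := le_trans S (leeD2r (E0 * K1)%:E S4).
rewrite -!EFinM -EFinD in S5.
have key : E0 * th / N * (N ^+ 2 - a * N) + E0 * K1 - E0 * th * N <= (1 - th * a / 4) * E0.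
  have -> : E0 * th / N * (N ^+ 2 - a * N) + E0 * K1 - E0 * th * N = E0 * (K1 - th * a).
    by rewrite /K1; field; rewrite gt_eqF.
  rewrite mulrC ler_pM2r //.
  have q1 : th * L ^+ 2 / (2 * N) <= th * a / 2.
    rewrite ler_pdivrMr ?mulr_gt0 //.
    have : L ^+ 2 <= a * N.
      rewrite ler_pdivrMr // in hLR; nra.
    move=> h; have := ler_wpM2l (ltW t0) h; lra.
  have q2 : 2 * th ^+ 2 * L ^+ 2 <= th * a / 4.
    have := ler_wpM2l (ltW t0) htL2; lra.
  rewrite /K1; lra.
move: S5; case E : (\esum_(i in [set: Pc]) (P x y i * expR (th * enorm (f x i)))%:E)%E => [s| |].
- rewrite -EFinD lee_fin => h.
  rewrite lee_fin; have := expR_ge0 (th * (R0 + L)); lra.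
- by [].
- have : (0 <= \esum_(i in [set: Pc]) (P x y i * expR (th * enorm (f x i)))%:E)%E.
    by apply: esum_ge0 => i _; rewrite lee_fin mulr_ge0 // expR_ge0.
  by rewrite E.
Qed.
End OneStep.

Section Chain.
Local Open Scope classical_set_scope.
Lemma chain_bound (R : realType) (d : nat) (Pc : choiceType)
    (f : 'rV[R]_d -> Pc -> 'rV[R]_d) (P : 'rV[R]_d -> Pc -> Pc -> R)
    (th rho K c : R) (g : 'rV[R]_d -> Pc -> \bar R) :
  (forall x i, nonneg_vec x -> nonneg_vec (f x i)) ->
  (forall x y y', 0 <= P x y y') ->
  (forall x y, (\esum_(y' in [set: Pc]) (P x y y')%:E = 1)%E) ->
  0 <= rho -> rho < 1 -> 0 <= K -> 0 <= c ->
  (forall x y, nonneg_vec x ->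
    (\esum_(y' in [set: Pc]) (P x y y' * expR (th * enorm (f x y')))%:E
     <= (rho * expR (th * enorm x) + K)%:E)%E) ->
  (forall x y, nonneg_vec x -> (g x y <= (c * expR (th * enorm x))%:E)%E) ->
  forall t x y, nonneg_vec x ->
  (chain_exp f P t g x y <=
    (c * (rho ^+ t * expR (th * enorm x) + K * (1 - rho ^+ t) / (1 - rho)))%:E)%E.
Proof.
move=> fnn P0 P1 r0 r1 K0 c0 hstep hg t.
have r1' : 1 - rho != 0 by rewrite subr_eq0 gt_eqF.
elim: t => [|t IH] x y xnn /=.
  by rewrite expr0 mul1r subrr mulr0 mul0r addr0; exact: hg.
set A := c * rho ^+ t; set B := c * (K * (1 - rho ^+ t) / (1 - rho)).
have A0 : 0 <= A by rewrite mulr_ge0 // exprn_ge0.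
have B0 : 0 <= B.
  have h1 : rho ^+ t <= 1 by rewrite exprn_ile1 // ltW.
  have h2 : 0 <= 1 - rho ^+ t by rewrite subr_ge0.
  have h3 : 0 < 1 - rho by rewrite subr_gt0.
  by rewrite mulr_ge0 // divr_ge0 ?mulr_ge0 // ltW.
apply: (@le_trans _ _ (\esum_(y' in [set: Pc])
   ((A%:E * (P x y y' * expR (th * enorm (f x y')))%:E) + B%:E * (P x y y')%:E))%E).
  apply: le_esum => i _.
  apply: le_trans (lee_wpmul2l _ (IH (f x i) i (fnn x i xnn))) _; first by rewrite lee_fin.
  rewrite -!EFinM -EFinD lee_fin /A /B.
  by rewrite le_eqVlt; apply/orP; left; apply/eqP; ring.
rewrite esumD; first last.
- by move=> i _; rewrite mule_ge0 // lee_fin.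
- by move=> i _; rewrite mule_ge0 // lee_fin mulr_ge0 // expR_ge0.
rewrite !esumZ //; first last.
- by move=> i; rewrite lee_fin mulr_ge0 // expR_ge0.
- by move=> i; rewrite lee_fin.
rewrite P1 mule1.
apply: le_trans (leeD2r _ (lee_wpmul2l _ (hstep x y xnn))) _; first by rewrite lee_fin.
rewrite -EFinM -EFinD lee_fin /A /B.
rewrite le_eqVlt; apply/orP; left; apply/eqP.
by rewrite exprS; field.
Qed.
End Chain.

Local Open Scope classical_set_scope.
Theorem proposition8 (R : realType) (d : nat) (Pc : countType)
    (f : 'rV[R]_d -> Pc -> 'rV[R]_d) (P : 'rV[R]_d -> Pc -> Pc -> R)
    (x0 : 'rV[R]_d) (y0 : Pc) (L a : R) (C : set 'rV[R]_d) :
  (forall x i, nonneg_vec x -> nonneg_vec (f x i)) ->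
  (forall x y y', 0 <= P x y y' <= 1) ->
  (forall x y, (\esum_(y' in [set: Pc]) (P x y y')%:E = 1)%E) ->
  nonneg_vec x0 ->
  0 < L ->
  (forall x i, nonneg_vec x -> enorm (x - f x i) <= L) ->
  C `<=` [set x | nonneg_vec x] ->
  (exists M : R, forall x, C x -> enorm x <= M) ->
  0 < a ->
  (forall x y, nonneg_vec x -> ~ C x ->
     forall j : 'I_d,
       (\esum_(y' in [set: Pc]) ((P x y y') * (f x y' ord0 j))%:E
          <= (x ord0 j - a * (x ord0 j / enorm x))%:E)%E) ->
  forall r : R, 0 < r ->
    exists B : R, forall t : nat,
      (chain_exp f P t (fun x _ => (enorm x `^ r)%:E) x0 y0 <= B%:E)%E.
Proof.
move=> fnn P01 P1 x0nn L0 hL _ [M hC] a0 hdr r r0.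
have P0 x y y' : 0 <= P x y y' by case/andP: (P01 x y y').
set R0 := `|M| + L ^+ 2 / a.
have La0 : 0 <= L ^+ 2 / a by rewrite divr_ge0 ?sqr_ge0 // ltW.
have hMR : M <= R0 by have := ler_norm M; rewrite /R0; lra.
have hLR : L ^+ 2 / a <= R0 by have := normr_ge0 M; rewrite /R0; lra.
have hR0 : 0 <= R0 by have := normr_ge0 M; rewrite /R0; lra.
set D := 2 * L + 8 * L ^+ 2 / a + a.
have L2a : 0 <= 8 * L ^+ 2 / a by rewrite divr_ge0 ?mulr_ge0 ?sqr_ge0 // ltW.
have D0 : 0 < D by rewrite /D; lra.
set th := 1 / D.
have t0 : 0 < th by rewrite divr_gt0.
have thD : th * D = 1 by rewrite /th mul1r mulVf ?gt_eqF.
have htL : 2 * th * L <= 1.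
  have := ler_wpM2l (ltW t0) (_ : 2 * L <= D); rewrite /D => /(_ ltac:(lra)).
  rewrite -/D; lra.
have htL2 : 8 * th * L ^+ 2 <= a.
  have e : a * D = 2 * a * L + 8 * L ^+ 2 + a * a by rewrite /D; field; rewrite gt_eqF.
  have h : 8 * L ^+ 2 <= a * D.
    have : 0 <= a * L by rewrite mulr_ge0 // ltW.
    have : 0 <= a * a by rewrite mulr_ge0 // ltW.
    rewrite e; lra.
  have := ler_wpM2l (ltW t0) h.
  have -> : th * (a * D) = a by rewrite mulrCA thD mulr1.
  lra.
have hta : th * a <= 1.
  have := ler_wpM2l (ltW t0) (_ : a <= D); rewrite /D => /(_ ltac:(lra)).
  rewrite -/D; lra.
set rho := 1 - th * a / 4.
have rho0 : 0 <= rho by rewrite /rho; lra.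
have rho1 : rho < 1 by rewrite /rho; have := mulr_gt0 t0 a0; lra.
set K := expR (th * (R0 + L)).
set c := expR (r * ln (r / th)).
have hstep := @one_step R d Pc f P L a M R0 th C fnn P0 P1 hL hC a0 hdr t0 htL htL2 hta hMR hLR hR0.
have hg (x : 'rV[R]_d) (y : Pc) : nonneg_vec x -> ((fun (x : 'rV[R]_d) (_ : Pc) => (enorm x `^ r)%:E) x y <= (c * expR (th * enorm x))%:E)%E.
  by move=> _; rewrite lee_fin; apply: pow_exp => //; exact: en_ge0.
have K0 : 0 <= K := expR_ge0 _.
have c0 : 0 <= c := expR_ge0 _.
have cb := @chain_bound R d Pc f P th rho K c (fun x _ => (enorm x `^ r)%:E) fnn P0 P1 rho0 rho1 K0 c0 hstep hg.
exists (c * (expR (th * enorm x0) + K / (1 - rho))).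
move=> t; apply: le_trans (cb t x0 y0 x0nn) _; rewrite lee_fin; apply: ler_wpM2l => //.
have h1 : rho ^+ t <= 1 by rewrite exprn_ile1 // ltW.
have h2 : 0 <= rho ^+ t by rewrite exprn_ge0.
have h3 : 0 < 1 - rho by rewrite subr_gt0.
have V0 := expR_ge0 (th * enorm x0).
apply: lerD; first by rewrite ler_piMl.
rewrite ler_pM2r ?invr_gt0 //.
rewrite ler_piMr //; lra.
Qed.
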